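(* Let $p>0$ be a real number and let $n=\lceil p\rceil$. Then the power function $\Phi:\mathbb{R}_+\to\mathbb{R}_+$, $\Phi(x)=x^p$, is subadditive of order $n$.
   Context: $\mathbb{R}_+$ denotes the set of nonnegative real numbers. For $n\in\mathbb{N}$ and an interval $I\subseteq\mathbb{R}_+$, a function $\Phi: I\to\mathbb{R}_+$ is called subadditive of order $n$ if for all $x,y\in I$ with $y>0$ and $x+y\in I$ one has $\Phi(x+y)\leq \Phi(x)+\frac{(x+y)^n-x^n}{y^n}\Phi(y)$. *)

(* Defs.v *)
From Stdlib Require Import Reals Lra.
Open Scope R_scope.

(* Power function x |-> x^p on R_+ for real exponent p > 0, with 0^p = 0.
   (Stdlib's Rpower x p = exp (p * ln x) is only meaningful for x > 0.) *)
Definition rpow (x p : R) : R := if Req_EM_T x 0 then 0 else Rpower x p.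

Definition subadditive_of_order_Rplus (n : nat) (Phi : R -> R) : Prop :=
  (forall x, 0 <= x -> 0 <= Phi x) /\
  (forall x y, 0 <= x -> 0 < y ->
     Phi (x + y) <= Phi x + ((x + y) ^ n - x ^ n) / (y ^ n) * Phi y).

(* Main.v *)
Require Import Defs.
From Stdlib Require Import Reals Lra.
Open Scope R_scope.

Lemma rpow_dec (r a b : R) : 0 < r <= 1 -> a <= b -> Rpower r b <= Rpower r a.
Proof.
  intros [Hr0 Hr1] Hab. unfold Rpower.
  assert (Hl : ln r <= 0).
  { destruct (Req_dec r 1) as [->|Hne]. rewrite ln_1; lra.
    rewrite <- ln_1. left. apply ln_increasing; lra. }
  destruct (Req_dec (b * ln r) (a * ln r)) as [E|E]. rewrite E; lra.
  left. apply exp_increasing. nra.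
Qed.

Lemma Rpower_pos (x p : R) : 0 < Rpower x p.
Proof. unfold Rpower. apply exp_pos. Qed.

Theorem corollary2p2 (p : R) (n : nat) :
  0 < p -> INR n - 1 < p <= INR n ->
  subadditive_of_order_Rplus n (fun x => rpow x p).
Proof.
  intros Hp [Hn1 Hn2]. split.
  - intros x _. unfold rpow. destruct (Req_EM_T x 0). lra. left; apply Rpower_pos.
  - intros x y Hx Hy. unfold rpow.
    destruct (Req_EM_T (x + y) 0) as [E|_]. lra.
    destruct (Req_EM_T y 0) as [E|_]. lra.
    assert (Hyn : 0 < y ^ n) by (apply pow_lt; lra).
    destruct (Req_EM_T x 0) as [E|Hx0].
    + subst x. rewrite Rplus_0_l.
      destruct n as [|n]. simpl in Hn2; lra.
      simpl pow at 2. rewrite Rmult_0_l, Rminus_0_r.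
      replace (y ^ S n / y ^ S n) with 1 by (field; lra). lra.
    + assert (Hx' : 0 < x) by lra.
      set (a := x + y).
      set (A := a / y). set (B := x / y). set (r := x / a).
      assert (HA : 1 <= A) by (unfold A, a; apply (Rmult_le_reg_r y); [lra|]; field_simplify; lra).
      assert (Hr : 0 < r <= 1) by (unfold r, a; split; [apply Rdiv_lt_0_compat; lra|];
        unfold Rdiv; rewrite <- (Rinv_r (x+y)) by lra; apply Rmult_le_compat_r;
        [left; apply Rinv_0_lt_compat|]; lra).
      assert (Ea : a = A * y) by (unfold A; field; lra).
      assert (Eb : x = (A * r) * y) by (unfold A, r, a; field; lra).
      assert (HA0 : 0 < A) by lra.
      rewrite Eb at 1 2. rewrite Ea at 1 2.
      clearbody a A B r. rewrite <- !Rpower_mult_distr by (try apply Rmult_lt_0_compat; lra).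
      rewrite !Rpow_mult_distr.
      replace ((A ^ n * y ^ n - A ^ n * r ^ n * y ^ n) / y ^ n)
        with (A ^ n * (1 - r ^ n)) by (field; lra).
      assert (H1 : Rpower A p <= A ^ n) by (rewrite <- Rpower_pow by lra; apply Rle_Rpower; lra).
      assert (H2 : Rpower r p <= 1) by (rewrite <- (Rpower_O r) by lra; apply rpow_dec; lra).
      assert (H3 : r ^ n <= Rpower r p) by (rewrite <- Rpower_pow by lra; apply rpow_dec; lra).
      assert (H4 : Rpower A p * (1 - Rpower r p) <= A ^ n * (1 - r ^ n)).
      { apply Rmult_le_compat; try lra. left; apply Rpower_pos. }
      pose proof (Rpower_pos y p).
      nra.
Qed.
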